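(* Two quadruplets $(\Phi_1,\Phi_2,\Phi_3,\Phi_{123})$ and $(\Phi_{23},\Phi_{13},\Phi_{12},\Phi)$ of (generic) complex numbers can be regarded as the vertices of two reciprocal $(4,6)$ configurations (with the vertex correspondence described in the context) if and only if $$Q(\Phi_1,\Phi_2,\Phi_3,\Phi_{123})=Q(\Phi_{23},\Phi_{13},\Phi_{12},\Phi).$$
   Context: The plane is identified with $\mathbb{C}$; $Q(P_1,P_2,P_3,P_4)=\frac{(P_1-P_2)(P_3-P_4)}{(P_2-P_3)(P_4-P_1)}$ is the cross-ratio. A $(4,6)$ configuration consists of four points of the plane, each pair of which is joined by a circular arc (generalized circles, i.e. circles or lines, allowed), such that the circular extensions of all six arcs pass through one common point $\Phi_*$ (possibly $\infty$, in which case all arcs are straight segments). Equivalently, a $(4,6)$ configuration is the image under a Möbius transformation of four points joined pairwise by six straight segments. For the two quadruplets, the arcs correspond as follows: $\{\Phi_1,\Phi_2\}\leftrightarrow\{\Phi,\Phi_{12}\}$, $\{\Phi_2,\Phi_3\}\leftrightarrow\{\Phi,\Phi_{23}\}$, $\{\Phi_3,\Phi_1\}\leftrightarrow\{\Phi,\Phi_{13}\}$, $\{\Phi_1,\Phi_{123}\}\leftrightarrow\{\Phi_{13},\Phi_{12}\}$, $\{\Phi_2,\Phi_{123}\}\leftrightarrow\{\Phi_{12},\Phi_{23}\}$, $\{\Phi_3,\Phi_{123}\}\leftrightarrow\{\Phi_{23},\Phi_{13}\}$. Two $(4,6)$ configurations (with common points $\Phi_*$ and $\Phi_*'$) are reciprocally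 related if the six angles made by the arcs of one configuration equal those made by the corresponding arcs of the other; equivalently, if there are Möbius transformations sending $\Phi_*$ and $\Phi_*'$ to $\infty$ such that the resulting two four-point/six-segment figures, after a rotation of one of them, have all corresponding segments parallel, i.e. form reciprocal triangles $\Delta(\Phi_{23},\Phi_{13},\Phi_{12})$, $\Delta(\Phi_1,\Phi_2,\Phi_3)$ with interior points $\Phi$, $\Phi_{123}$ (edges $(\Phi_1,\Phi_2),(\Phi_2,\Phi_3),(\Phi_3,\Phi_1)$ parallel to $(\Phi,\Phi_{12}),(\Phi,\Phi_{23}),(\Phi,\Phi_{13})$, and $(\Phi_1,\Phi_{123}),(\Phi_2,\Phi_{123}),(\Phi_3,\Phi_{123})$ parallel to $(\Phi_{13},\Phi_{12}),(\Phi_{12},\Phi_{23}),(\Phi_{23},\Phi_{13})$). Usual reciprocal triangles are the special case where all arcs are straight. *)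

(* Defs.v *)
From HB Require Import structures.
From mathcomp Require Import all_boot all_order all_algebra.
From mathcomp Require Import complex.
Set Implicit Arguments. Unset Strict Implicit. Unset Printing Implicit Defensive.
Import Order.TTheory GRing.Theory Num.Theory.
Local Open Scope ring_scope.

Definition cross_ratio (R : rcfType) (P1 P2 P3 P4 : R[i]) : R[i] :=
  (P1 - P2) * (P3 - P4) / ((P2 - P3) * (P4 - P1)).

(* The Riemann sphere: None is the point at infinity. *)
Definition sphere (R : rcfType) := option R[i].

Record mobius (R : rcfType) := Mobius {
  mob_a : R[i]; mob_b : R[i]; mob_c : R[i]; mob_d : R[i];
  mob_det : mob_a * mob_d - mob_b * mob_c != 0 }.

Definition mob_app (R : rcfType) (M : mobius R) (z : sphere R) : sphere R :=
  let: Mobius a b c d _ := M in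
  match z with
  | None => if c == 0 then None else Some (a / c)
  | Some w => if c * w + d == 0 then None else Some ((a * w + b) / (c * w + d))
  end.

(* Image of a finite point, as a finite point (the value 0 is a dummy used
   only when the image is infinity, which never happens below since the
   vertices differ from the point sent to infinity). *)
Definition mob_img (R : rcfType) (M : mobius R) (z : R[i]) : R[i] :=
  odflt 0 (mob_app M (Some z)).

(* Two vectors of the plane are parallel: their ratio is real. *)
Definition parallel (R : rcfType) (p q : R[i]) : Prop :=
  'Im (p * q^*) = 0.

(* A (4,6) configuration: four pairwise distinct points P1..P4, the six arcs
   joining them all lying on circles through the common point Ps (which is
   on the Riemann sphere, possibly infinity, and distinct from the vertices;
   given Ps the six arcs are determined as the arcs of the circles through
   Ps and the two endpoints). *)
Definition config46 (R : rcfType) (P1 P2 P3 P4 : R[i]) (Ps : sphere R) : Prop :=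
  [&& P1 != P2, P1 != P3, P1 != P4, P2 != P3, P2 != P4 & P3 != P4] /\
  [/\ Ps <> Some P1, Ps <> Some P2, Ps <> Some P3 & Ps <> Some P4].

(* Reciprocity of the (4,6) configurations (F1,F2,F3,F123; Ps) and
   (F23,F13,F12,F; Ps'): there are Moebius transformations sending Ps and
   Ps' to infinity such that, after a rotation (by the unit complex number u)
   of the second figure, corresponding segments are parallel:
     (F1,F2)~(F,F12), (F2,F3)~(F,F23), (F3,F1)~(F,F13),
     (F1,F123)~(F13,F12), (F2,F123)~(F12,F23), (F3,F123)~(F23,F13). *)
Definition reciprocal46 (R : rcfType)
    (F1 F2 F3 F123 F23 F13 F12 F : R[i]) (Ps Ps' : sphere R) : Prop :=
  exists (M M' : mobius R) (u : R[i]),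
    [/\ mob_app M Ps = None, mob_app M' Ps' = None, `|u| = 1 &
    (let m := mob_img M in let m' := fun z => u * mob_img M' z in
    [/\ parallel (m F1 - m F2) (m' F - m' F12),
        parallel (m F2 - m F3) (m' F - m' F23) &
        parallel (m F3 - m F1) (m' F - m' F13)] /\
    [/\ parallel (m F1 - m F123) (m' F13 - m' F12),
        parallel (m F2 - m F123) (m' F12 - m' F23) &
        parallel (m F3 - m F123) (m' F23 - m' F13)])].

(* Main.v *)
Require Import Defs.
From HB Require Import structures.
From mathcomp Require Import all_boot all_order all_algebra.
From mathcomp Require Import complex.
From mathcomp Require Import ring lra.
Import Order.TTheory GRing.Theory Num.Theory.
Local Open Scope ring_scope.

Section S.
Local Open Scope complex_scope.
Variable R : rcfType.
Implicit Types (a b c d : R).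

Lemma conjE (x : R[i]) : (x^*)%R = conjc x. Proof. by []. Qed.

Lemma parE (p q : R[i]) : parallel p q <->
  complex.Im p * complex.Re q - complex.Re p * complex.Im q = 0.
Proof.
case: p => a b; case: q => c d /=.
rewrite /parallel -complexIm conjE /=.
split; first by case=> h; rewrite -h; ring.
by move=> h; apply/eqP; rewrite eq_complex /= eqxx andbT; apply/eqP; lra.
Qed.

Lemma par_scale (p : R[i]) (r : R) : parallel p (r%:C * p).
Proof. rewrite parE; case: p => a b /=; ring. Qed.

Lemma lin1 (e x k : R) : x = 0 -> e = k * x -> e = 0.
Proof. by move=> -> ->; rewrite mulr0. Qed.

Lemma par_real (p q : R[i]) : p != 0 -> parallel p q -> exists r : R, q = r%:C * p.
Proof.
rewrite parE; case: p => a b; case: q => c d /= hp h.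
have hn : a ^+ 2 + b ^+ 2 != 0.
  apply: contra hp => /eqP hn.
  have ha : a = 0 by nra.
  have hb : b = 0 by nra.
  by rewrite ha hb.
exists ((a * c + b * d) / (a ^+ 2 + b ^+ 2)).
apply/eqP; rewrite eq_complex /=; apply/andP; split; apply/eqP.
- apply: (mulIf hn); rewrite mul0r subr0 mulrAC divfK //.
  apply/eqP; rewrite -subr_eq0; apply/eqP.
  by apply: (@lin1 _ _ b h); ring.
- apply: (mulIf hn); rewrite mul0r addr0 mulrAC divfK //.
  apply/eqP; rewrite -subr_eq0; apply/eqP.
  by apply: (@lin1 _ _ (- a) h); ring.
Qed.

Lemma mob_fin (M : mobius R) Ps z : mob_app M Ps = None -> Ps <> Some z ->
  mob_c M * z + mob_d M != 0.
Proof.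
case: M => a b c d hdet /=; case: Ps => [w|] /=.
- case: ifP => // /eqP hw _ hne; apply/eqP => hz.
  have : c * (w - z) = 0.
    have -> : c * (w - z) = (c * w + d) - (c * z + d) by ring.
    by rewrite hw hz subrr.
  move/eqP; rewrite mulf_eq0 subr_eq0 => /orP [/eqP hc | /eqP hwz]; last by apply: hne; rewrite hwz.
  move: hz; rewrite hc mul0r add0r => hd.
  by move: hdet; rewrite hc hd !mulr0 subrr eqxx.
- case: ifP => // /eqP hc _ _; rewrite hc mul0r add0r.
  by apply: contra hdet => /eqP ->; rewrite hc !mulr0 subrr.
Qed.

Lemma mob_imgE (M : mobius R) z : mob_c M * z + mob_d M != 0 ->
  mob_img M z = (mob_a M * z + mob_b M) / (mob_c M * z + mob_d M).
Proof. by case: M => a b c d hdet /= h; rewrite /mob_img /= (negbTE h). Qed.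

Lemma mob_diff (a b c d x y : R[i]) : c * x + d != 0 -> c * y + d != 0 ->
  (a * x + b) / (c * x + d) - (a * y + b) / (c * y + d)
  = (a * d - b * c) * (x - y) / ((c * x + d) * (c * y + d)).
Proof. move=> hx hy; field. by rewrite hx hy. Qed.

Lemma cr_mob (a b c d z1 z2 z3 z4 : R[i]) : a * d - b * c != 0 ->
  c * z1 + d != 0 -> c * z2 + d != 0 -> c * z3 + d != 0 -> c * z4 + d != 0 ->
  z2 != z3 -> z4 != z1 ->
  cross_ratio ((a * z1 + b) / (c * z1 + d)) ((a * z2 + b) / (c * z2 + d))
              ((a * z3 + b) / (c * z3 + d)) ((a * z4 + b) / (c * z4 + d))
  = cross_ratio z1 z2 z3 z4.
Proof.
move=> hdet h1 h2 h3 h4 h23 h41; rewrite /cross_ratio !mob_diff //.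
rewrite -subr_eq0 in h23; rewrite -subr_eq0 in h41.
by field; rewrite h1 h2 h3 h4 h23 h41 hdet.
Qed.

Lemma cr_scale (u z1 z2 z3 z4 : R[i]) : u != 0 -> z2 != z3 -> z4 != z1 ->
  cross_ratio (u * z1) (u * z2) (u * z3) (u * z4) = cross_ratio z1 z2 z3 z4.
Proof.
move=> hu h23 h41; rewrite -subr_eq0 in h23; rewrite -subr_eq0 in h41.
by rewrite /cross_ratio -!mulrBr; field; rewrite hu h23 h41.
Qed.

Lemma real_core (X1 Y1 X2 Y2 X3 Y3 r1 r2 r3 r4 r6 : R) :
  r1 != 0 -> r2 != 0 ->
  r4 * X1 = r1 * (X1 - X2) - r3 * (X3 - X1) ->
  r4 * Y1 = r1 * (Y1 - Y2) - r3 * (Y3 - Y1) ->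
  r6 * X3 = r3 * (X3 - X1) - r2 * (X2 - X3) ->
  r6 * Y3 = r3 * (Y3 - Y1) - r2 * (Y2 - Y3) ->
  ~ [/\ X2 * Y3 - Y2 * X3 = 0, X3 * Y1 - Y3 * X1 = 0 & X1 * Y2 - Y1 * X2 = 0] ->
  r1 * r6 = r2 * r4.
Proof.
move=> h1 h2 ex1 ey1 ex3 ey3 hD.
have {}ex1 : r1 * (X1 - X2) - r3 * (X3 - X1) - r4 * X1 = 0 by rewrite ex1 subrr.
have {}ey1 : r1 * (Y1 - Y2) - r3 * (Y3 - Y1) - r4 * Y1 = 0 by rewrite ey1 subrr.
have {}ex3 : r3 * (X3 - X1) - r2 * (X2 - X3) - r6 * X3 = 0 by rewrite ex3 subrr.
have {}ey3 : r3 * (Y3 - Y1) - r2 * (Y2 - Y3) - r6 * Y3 = 0 by rewrite ey3 subrr.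
pose D1 := X2 * Y3 - Y2 * X3.
pose D2 := X3 * Y1 - Y3 * X1.
pose D3 := X1 * Y2 - Y1 * X2.
have e1a : (r1 + r3 - r4) * D2 + r1 * D1 = 0.
  transitivity (X3 * (r1 * (Y1 - Y2) - r3 * (Y3 - Y1) - r4 * Y1)
              - Y3 * (r1 * (X1 - X2) - r3 * (X3 - X1) - r4 * X1)).
    by rewrite /D1 /D2; ring.
  by rewrite ex1 ey1 !mulr0 subrr.
have e1c : r3 * D2 - r1 * D3 = 0.
  transitivity (X1 * (r1 * (Y1 - Y2) - r3 * (Y3 - Y1) - r4 * Y1)
              - Y1 * (r1 * (X1 - X2) - r3 * (X3 - X1) - r4 * X1)).
    by rewrite /D3 /D2; ring.
  by rewrite ex1 ey1 !mulr0 subrr.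
have e3a : (r2 + r3 - r6) * D2 + r2 * D3 = 0.
  transitivity (- (X1 * (r3 * (Y3 - Y1) - r2 * (Y2 - Y3) - r6 * Y3)
              - Y1 * (r3 * (X3 - X1) - r2 * (X2 - X3) - r6 * X3))).
    by rewrite /D3 /D2; ring.
  by rewrite ex3 ey3 !mulr0 subrr oppr0.
have e3c : r2 * D1 - r3 * D2 = 0.
  transitivity (X3 * (r3 * (Y3 - Y1) - r2 * (Y2 - Y3) - r6 * Y3)
              - Y3 * (r3 * (X3 - X1) - r2 * (X2 - X3) - r6 * X3)).
    by rewrite /D1 /D2; ring.
  by rewrite ex3 ey3 !mulr0 subrr.
have hD2 : D2 != 0.
  apply/eqP => h0; apply: hD.
  move: e1c e3c; rewrite h0 !mulr0 sub0r subr0 => /eqP; rewrite oppr_eq0 mulf_eq0 (negbTE h1) /= => /eqP e3.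
  move/eqP; rewrite mulf_eq0 (negbTE h2) /= => /eqP e1.
  by split.
have : D2 * (r1 * r6 - r2 * r4) = 0.
  transitivity (r2 * ((r1 + r3 - r4) * D2 + r1 * D1) - r2 * (r3 * D2 - r1 * D3)
     - r1 * ((r2 + r3 - r6) * D2 + r2 * D3) - r1 * (r2 * D1 - r3 * D2)); first by ring.
  by rewrite e1a e1c e3a e3c !mulr0 !subrr.
by move/eqP; rewrite mulf_eq0 (negbTE hD2) /= subr_eq0 => /eqP.
Qed.


Lemma zero_by (v w e s t u : R) : s = 0 -> t = 0 -> u = 0 ->
  e = v * (s + t + u) + w * t -> e = 0.
Proof. by move=> -> -> -> ->; rewrite !addr0 !mulr0 addr0. Qed.

Lemma eq_via (x y u v : R) : x = y -> x - y = u - v -> u = v.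
Proof. by move=> ->; rewrite subrr => /eqP; rewrite eq_sym subr_eq0 => /eqP. Qed.

Lemma im_div0 (N Dn : R[i]) :
  complex.Im N * complex.Re Dn - complex.Re N * complex.Im Dn = 0 ->
  complex.Im (N / Dn) = 0.
Proof.
case: N => a b; case: Dn => c d /= h.
rewrite (_ : a * - (d / (c ^+ 2 + d ^+ 2)) + b * (c / (c ^+ 2 + d ^+ 2))
   = (b * c - a * d) / (c ^+ 2 + d ^+ 2)); last by ring.
by rewrite h mul0r.
Qed.

Lemma complex_key (A1 A2 A3 A4 : R[i]) (r1 r2 r3 r4 r6 : R) :
  r1 != 0 -> r2 != 0 ->
  r4%:C * (A1 - A4) = r1%:C * (A1 - A2) - r3%:C * (A3 - A1) ->
  r6%:C * (A3 - A4) = r3%:C * (A3 - A1) - r2%:C * (A2 - A3) ->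
  complex.Im (cross_ratio A1 A2 A3 A4) != 0 -> r1 * r6 = r2 * r4.
Proof.
case: A1 => a1 b1; case: A2 => a2 b2; case: A3 => a3 b3; case: A4 => a4 b4.
move=> h1 h2 c1 c3 hIm.
have ex1 := congr1 (@complex.Re R) c1. have ey1 := congr1 (@complex.Im R) c1.
have ex3 := congr1 (@complex.Re R) c3. have ey3 := congr1 (@complex.Im R) c3.
simpl in ex1, ey1, ex3, ey3.
apply: (@real_core (a1 - a4) (b1 - b4) (a2 - a4) (b2 - b4) (a3 - a4) (b3 - b4)
          r1 r2 r3 r4 r6 h1 h2).
- by apply: (@eq_via _ _ _ _ ex1); ring.
- by apply: (@eq_via _ _ _ _ ey1); ring.
- by apply: (@eq_via _ _ _ _ ex3); ring.
- by apply: (@eq_via _ _ _ _ ey3); ring.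
move=> [hD1 hD2 hD3]; move/negP: hIm; apply; apply/eqP.
rewrite /cross_ratio; apply: im_div0 => /=.
apply: (@zero_by ((a1 - a4) * (a3 - a4) + (b1 - b4) * (b3 - b4))
   (((a1 - a4) - (a2 - a4)) * ((a2 - a4) - (a3 - a4)) + ((b1 - b4) - (b2 - b4)) * ((b2 - b4) - (b3 - b4)))
   _ _ _ _ hD1 hD2 hD3).
ring.
Qed.

Lemma core (A1 A2 A3 A4 B1 B2 B3 B4 : R[i]) :
  A1 != A2 -> A2 != A3 -> A3 != A1 -> A1 != A4 -> A3 != A4 ->
  B4 != B3 -> B4 != B1 -> B2 != B3 ->
  complex.Im (cross_ratio A1 A2 A3 A4) != 0 ->
  parallel (A1 - A2) (B4 - B3) -> parallel (A2 - A3) (B4 - B1) ->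
  parallel (A3 - A1) (B4 - B2) -> parallel (A1 - A4) (B2 - B3) ->
  parallel (A3 - A4) (B1 - B2) ->
  cross_ratio A1 A2 A3 A4 = cross_ratio B1 B2 B3 B4.
Proof.
move=> hA12 hA23 hA31 hA14 hA34 hB43 hB41 hB23 hIm p1 p2 p3 p4 p6.
have nz : forall x y : R[i], x != y -> x - y != 0 by move=> x y; rewrite subr_eq0.
have [r1 e1] := @par_real _ _ (nz _ _ hA12) p1.
have [r2 e2] := @par_real _ _ (nz _ _ hA23) p2.
have [r3 e3] := @par_real _ _ (nz _ _ hA31) p3.
have [r4 e4] := @par_real _ _ (nz _ _ hA14) p4.
have [r6 e6] := @par_real _ _ (nz _ _ hA34) p6.
have rnz : forall (r : R) (x y z : R[i]), x != y -> x - y = r%:C * z -> r != 0.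
  move=> r x y z hxy e; apply: contra hxy => /eqP r0.
  by rewrite -subr_eq0 e r0 mul0r.
have r1n := rnz _ _ _ _ hB43 e1.
have r2n := rnz _ _ _ _ hB41 e2.
have r4n := rnz _ _ _ _ hB23 e4.
have c1 : r4%:C * (A1 - A4) = r1%:C * (A1 - A2) - r3%:C * (A3 - A1).
  by rewrite -e4 -e1 -e3; ring.
have c3 : r6%:C * (A3 - A4) = r3%:C * (A3 - A1) - r2%:C * (A2 - A3).
  by rewrite -e6 -e3 -e2; ring.
have key := @complex_key _ _ _ _ _ _ _ _ _ r1n r2n c1 c3 hIm.
have hr6 : r6 = r2 * r4 / r1 by rewrite -key; field.
have r6C : r6%:C = r2%:C * r4%:C / r1%:C by rewrite hr6 !rmorphM /= fmorphV.
have Cnz : forall r : R, r != 0 -> r%:C != 0.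
  by move=> r hr; apply: contra hr => /eqP [->].
rewrite /cross_ratio e6 e4 e2 -(opprB B4 B3) e1 r6C.
move: (nz _ _ hA12) (nz _ _ hA23) (nz _ _ hA14) (nz _ _ hA34) (Cnz _ r1n) (Cnz _ r2n) (Cnz _ r4n).
move=> n1 n2 n3 n4 n5 n6 n7.
have n8 : A4 - A1 != 0 by rewrite -opprB oppr_eq0.
by field; rewrite n2 n3 n8 n5 n6 n7.
Qed.


Lemma goodk (a b c d g11 g12 g21 g22 h11 h12 h21 h22 z z' : R[i]) :
  a = h22 * g11 - h12 * g21 -> b = h22 * g12 - h12 * g22 ->
  c = - h21 * g11 + h11 * g21 -> d = - h21 * g12 + h11 * g22 ->
  (g11 * z + g12) * (h21 * z' + h22) = (g21 * z + g22) * (h11 * z' + h12) ->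
  (g11 * z + g12 != 0) || (g21 * z + g22 != 0) ->
  h11 * h22 - h12 * h21 != 0 ->
  c * z + d != 0 /\ (a * z + b) / (c * z + d) = z'.
Proof.
move=> -> -> -> -> X hg hH.
have E2 : (- h21 * g11 + h11 * g21) * z + (- h21 * g12 + h11 * g22) = 0 ->
          (g21 * z + g22) * (h11 * h22 - h12 * h21) = 0.
  move=> e; transitivity (((- h21 * g11 + h11 * g21) * z + (- h21 * g12 + h11 * g22))
      * (h21 * z' + h22) + h21 * ((g11 * z + g12) * (h21 * z' + h22)
         - (g21 * z + g22) * (h11 * z' + h12))); first by ring.
  by rewrite e X subrr mul0r mulr0 addr0.
have E1 : (- h21 * g11 + h11 * g21) * z + (- h21 * g12 + h11 * g22) = 0 ->
          (g11 * z + g12) * (h11 * h22 - h12 * h21) = 0.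
  move=> e; transitivity (((- h21 * g11 + h11 * g21) * z + (- h21 * g12 + h11 * g22))
      * (h11 * z' + h12) + h11 * ((g11 * z + g12) * (h21 * z' + h22)
         - (g21 * z + g22) * (h11 * z' + h12))); first by ring.
  by rewrite e X subrr mul0r mulr0 addr0.
have hc : (- h21 * g11 + h11 * g21) * z + (- h21 * g12 + h11 * g22) != 0.
  apply/eqP => e; move: hg.
  move/eqP: (E1 e); rewrite mulf_eq0 (negbTE hH) orbF => /eqP ->.
  move/eqP: (E2 e); rewrite mulf_eq0 (negbTE hH) orbF => /eqP ->.
  by rewrite eqxx.
split => //.
apply: (mulIf hc); rewrite mulfVK //.
apply/eqP; rewrite -subr_eq0; apply/eqP.
transitivity ((g11 * z + g12) * (h21 * z' + h22) - (g21 * z + g22) * (h11 * z' + h12)); first by ring.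
by rewrite X subrr.
Qed.

Definition good (M : mobius R) (z z' : R[i]) :=
  mob_c M * z + mob_d M != 0 /\ mob_img M z = z'.

Lemma mob_interp (P1 P2 P3 P4 Q1 Q2 Q3 Q4 : R[i]) :
  P1 != P2 -> P1 != P3 -> P1 != P4 -> P2 != P3 -> P2 != P4 -> P3 != P4 ->
  Q1 != Q2 -> Q1 != Q3 -> Q1 != Q4 -> Q2 != Q3 -> Q2 != Q4 -> Q3 != Q4 ->
  cross_ratio P1 P2 P3 P4 = cross_ratio Q1 Q2 Q3 Q4 ->
  exists M : mobius R, [/\ good M P1 Q1, good M P2 Q2, good M P3 Q3 & good M P4 Q4].
Proof.
move=> p12 p13 p14 p23 p24 p34 q12 q13 q14 q23 q24 q34 hQ.
have nz : forall x y : R[i], x != y -> x - y != 0 by move=> x y; rewrite subr_eq0.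
have nz' : forall x y : R[i], x != y -> y - x != 0 by move=> x y; rewrite subr_eq0 eq_sym.
pose g11 := P2 - P3. pose g12 := - P1 * (P2 - P3).
pose g21 := P2 - P1. pose g22 := - P3 * (P2 - P1).
pose h11 := Q2 - Q3. pose h12 := - Q1 * (Q2 - Q3).
pose h21 := Q2 - Q1. pose h22 := - Q3 * (Q2 - Q1).
pose a := h22 * g11 - h12 * g21. pose b := h22 * g12 - h12 * g22.
pose c := - h21 * g11 + h11 * g21. pose d := - h21 * g12 + h11 * g22.
have dG : g11 * g22 - g12 * g21 = (P2 - P3) * (P2 - P1) * (P1 - P3) by rewrite /g11 /g12 /g21 /g22; ring.
have dH : h11 * h22 - h12 * h21 = (Q2 - Q3) * (Q2 - Q1) * (Q1 - Q3) by rewrite /h11 /h12 /h21 /h22; ring.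
have dGn : g11 * g22 - g12 * g21 != 0.
  by rewrite dG !mulf_neq0 // ?nz ?nz' // eq_sym.
have dHn : h11 * h22 - h12 * h21 != 0.
  by rewrite dH !mulf_neq0 // ?nz ?nz' // eq_sym.
have hdet : a * d - b * c != 0.
  rewrite (_ : a * d - b * c = (h11 * h22 - h12 * h21) * (g11 * g22 - g12 * g21)).
    by rewrite mulf_neq0.
  by rewrite /a /b /c /d; ring.
exists (Mobius hdet).
have G : forall z z', (g11 * z + g12) * (h21 * z' + h22) = (g21 * z + g22) * (h11 * z' + h12) ->
    (g11 * z + g12 != 0) || (g21 * z + g22 != 0) -> good (Mobius hdet) z z'.
  move=> z z' X hg.
  have [hc he] := @goodk a b c d g11 g12 g21 g22 h11 h12 h21 h22 z z'
     erefl erefl erefl erefl X hg dHn.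
  by split => //=; rewrite mob_imgE.
split; apply: G.
- by rewrite /g11 /g12 /g21 /g22 /h11 /h12 /h21 /h22; ring.
- apply/orP; right; rewrite /g21 /g22.
  rewrite (_ : (P2 - P1) * P1 + - P3 * (P2 - P1) = (P2 - P1) * (P1 - P3)); last by ring.
  by rewrite mulf_neq0 // ?nz ?nz' // eq_sym.
- by rewrite /g11 /g12 /g21 /g22 /h11 /h12 /h21 /h22; ring.
- apply/orP; right; rewrite /g21 /g22.
  rewrite (_ : (P2 - P1) * P2 + - P3 * (P2 - P1) = (P2 - P1) * (P2 - P3)); last by ring.
  by rewrite mulf_neq0 // ?nz ?nz' // eq_sym.
- by rewrite /g11 /g12 /g21 /g22 /h11 /h12 /h21 /h22; ring.
- apply/orP; left; rewrite /g11 /g12.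
  rewrite (_ : (P2 - P3) * P3 + - P1 * (P2 - P3) = (P2 - P3) * (P3 - P1)); last by ring.
  by rewrite mulf_neq0 // ?nz ?nz' // eq_sym.
- move: hQ; rewrite /cross_ratio => /eqP; rewrite eqr_div; first last.
  + by rewrite mulf_neq0 // ?nz ?nz' // eq_sym.
  + by rewrite mulf_neq0 // ?nz ?nz' // eq_sym.
  move=> /eqP E.
  rewrite /g11 /g12 /g21 /g22 /h11 /h12 /h21 /h22.
  transitivity ((Q1 - Q2) * (Q3 - Q4) * ((P2 - P3) * (P4 - P1))); first by ring.
  by rewrite -E; ring.
- apply/orP; right; rewrite /g21 /g22.
  rewrite (_ : (P2 - P1) * P4 + - P3 * (P2 - P1) = (P2 - P1) * (P4 - P3)); last by ring.
  by rewrite mulf_neq0 // ?nz ?nz' // eq_sym.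
Qed.


Definition cx (p r : R[i]) : R := complex.Im (conjc p * r).

Lemma cxx (p : R[i]) : cx p p = 0. Proof. by case: p => a b; rewrite /cx /=; ring. Qed.
Lemma cx0l (p : R[i]) : cx 0 p = 0. Proof. by case: p => a b; rewrite /cx /=; ring. Qed.
Lemma cx0r (p : R[i]) : cx p 0 = 0. Proof. by case: p => a b; rewrite /cx /=; ring. Qed.

Lemma distinct_of_D (A1 A2 A3 A4 : R[i]) :
  cx (A2 - A4) (A3 - A4) != 0 -> cx (A3 - A4) (A1 - A4) != 0 -> cx (A1 - A4) (A2 - A4) != 0 ->
  [&& A1 != A2, A1 != A3, A1 != A4, A2 != A3, A2 != A4 & A3 != A4].
Proof.
move=> h1 h2 h3; apply/and5P; split; last apply/andP; try split.
- by apply: contra h3 => /eqP ->; rewrite cxx.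
- by apply: contra h2 => /eqP ->; rewrite cxx.
- by apply: contra h2 => /eqP ->; rewrite subrr cx0r.
- by apply: contra h1 => /eqP ->; rewrite cxx.
- by apply: contra h1 => /eqP ->; rewrite subrr cx0l.
- by apply: contra h1 => /eqP ->; rewrite subrr cx0r.
Qed.

Lemma recip_id1 (A1 A2 A3 A4 : R[i]) :
  let D1 := cx (A2 - A4) (A3 - A4) in let D2 := cx (A3 - A4) (A1 - A4) in
  let D3 := cx (A1 - A4) (A2 - A4) in let S := D1 + D2 + D3 in
  [/\ - ((D1 * D3)%:C * (A3 - A1)) - - ((D1 * D2)%:C * (A1 - A2)) = (D1 * S)%:C * (A1 - A4),
      - ((D1 * D2)%:C * (A1 - A2)) - - ((D2 * D3)%:C * (A2 - A3)) = (D2 * S)%:C * (A2 - A4) &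
      - ((D2 * D3)%:C * (A2 - A3)) - - ((D1 * D3)%:C * (A3 - A1)) = (D3 * S)%:C * (A3 - A4)].
Proof.
case: A1 => a1 b1; case: A2 => a2 b2; case: A3 => a3 b3; case: A4 => a4 b4 /=.
by split; apply/eqP; rewrite eq_complex /=; apply/andP; split; apply/eqP; rewrite /cx /=; ring.
Qed.

Lemma neq_scale (x y z : R[i]) (r : R) : x - y = r%:C * z -> r != 0 -> z != 0 -> x != y.
Proof.
move=> e hr hz; rewrite -subr_eq0 e mulf_neq0 //.
by apply: contra hr => /eqP [->].
Qed.

Lemma recip_fig (A1 A2 A3 A4 : R[i]) :
  cx (A2 - A4) (A3 - A4) != 0 -> cx (A3 - A4) (A1 - A4) != 0 -> cx (A1 - A4) (A2 - A4) != 0 ->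
  cx (A2 - A4) (A3 - A4) + cx (A3 - A4) (A1 - A4) + cx (A1 - A4) (A2 - A4) != 0 ->
  complex.Im (cross_ratio A1 A2 A3 A4) != 0 ->
  exists B1 B2 B3 B4 : R[i],
    [/\ [&& B1 != B2, B1 != B3, B1 != B4, B2 != B3, B2 != B4 & B3 != B4],
        cross_ratio A1 A2 A3 A4 = cross_ratio B1 B2 B3 B4,
        [/\ parallel (A1 - A2) (B4 - B3), parallel (A2 - A3) (B4 - B1)
          & parallel (A3 - A1) (B4 - B2)] &
        [/\ parallel (A1 - A4) (B2 - B3), parallel (A2 - A4) (B3 - B1)
          & parallel (A3 - A4) (B1 - B2)]].
Proof.
move=> h1 h2 h3 hS hIm.
have /and5P [a12 a13 a14 a23 /andP [a24 a34]] := @distinct_of_D _ _ _ _ h1 h2 h3.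
have nz : forall x y : R[i], x != y -> x - y != 0 by move=> x y; rewrite subr_eq0.
have nz' : forall x y : R[i], x != y -> y - x != 0 by move=> x y; rewrite subr_eq0 eq_sym.
have [i1 i2 i3] := recip_id1 A1 A2 A3 A4.
set D1 := cx (A2 - A4) (A3 - A4) in h1 hS i1 i2 i3.
set D2 := cx (A3 - A4) (A1 - A4) in h2 hS i1 i2 i3.
set D3 := cx (A1 - A4) (A2 - A4) in h3 hS i1 i2 i3.
set S := D1 + D2 + D3 in hS i1 i2 i3.
exists (- ((D2 * D3)%:C * (A2 - A3))), (- ((D1 * D3)%:C * (A3 - A1))),
       (- ((D1 * D2)%:C * (A1 - A2))), 0.
have e1 : 0 - - ((D1 * D2)%:C * (A1 - A2)) = (D1 * D2)%:C * (A1 - A2) by rewrite sub0r opprK.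
have e2 : 0 - - ((D2 * D3)%:C * (A2 - A3)) = (D2 * D3)%:C * (A2 - A3) by rewrite sub0r opprK.
have e3 : 0 - - ((D1 * D3)%:C * (A3 - A1)) = (D1 * D3)%:C * (A3 - A1) by rewrite sub0r opprK.
have n43 : 0 != - ((D1 * D2)%:C * (A1 - A2)).
  by apply: (@neq_scale _ _ _ _ e1); rewrite ?mulf_neq0 ?nz.
have n41 : 0 != - ((D2 * D3)%:C * (A2 - A3)).
  by apply: (@neq_scale _ _ _ _ e2); rewrite ?mulf_neq0 ?nz.
have n42 : 0 != - ((D1 * D3)%:C * (A3 - A1)).
  by apply: (@neq_scale _ _ _ _ e3); rewrite ?mulf_neq0 ?nz' // eq_sym.
have n23 : - ((D1 * D3)%:C * (A3 - A1)) != - ((D1 * D2)%:C * (A1 - A2)).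
  by apply: (@neq_scale _ _ _ _ i1); rewrite ?mulf_neq0 ?nz.
have n31 : - ((D1 * D2)%:C * (A1 - A2)) != - ((D2 * D3)%:C * (A2 - A3)).
  by apply: (@neq_scale _ _ _ _ i2); rewrite ?mulf_neq0 ?nz.
have n12 : - ((D2 * D3)%:C * (A2 - A3)) != - ((D1 * D3)%:C * (A3 - A1)).
  by apply: (@neq_scale _ _ _ _ i3); rewrite ?mulf_neq0 ?nz.
have P1 : parallel (A1 - A2) (0 - - ((D1 * D2)%:C * (A1 - A2))) by rewrite e1; apply: par_scale.
have P2 : parallel (A2 - A3) (0 - - ((D2 * D3)%:C * (A2 - A3))) by rewrite e2; apply: par_scale.
have P3 : parallel (A3 - A1) (0 - - ((D1 * D3)%:C * (A3 - A1))) by rewrite e3; apply: par_scale.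
have P4 : parallel (A1 - A4) (- ((D1 * D3)%:C * (A3 - A1)) - - ((D1 * D2)%:C * (A1 - A2))).
  by rewrite i1; apply: par_scale.
have P5 : parallel (A2 - A4) (- ((D1 * D2)%:C * (A1 - A2)) - - ((D2 * D3)%:C * (A2 - A3))).
  by rewrite i2; apply: par_scale.
have P6 : parallel (A3 - A4) (- ((D2 * D3)%:C * (A2 - A3)) - - ((D1 * D3)%:C * (A3 - A1))).
  by rewrite i3; apply: par_scale.
split => //.
- apply/and5P; split; try by [|rewrite eq_sym].
  by apply/andP; split; by [|rewrite eq_sym].
- apply: core => //; by rewrite eq_sym.
Qed.


Definition fA1 (q : R[i]) := - ((2%:C * q - 1%:C) * (2%:C - q)).
Definition fA2 (q : R[i]) := (q + 1%:C) * (2%:C - q).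
Definition fA3 (q : R[i]) : R[i] := 0.
Definition fA4 (q : R[i]) := (q + 1%:C) * (2%:C * q - 1%:C).

Lemma fig_D (q : R[i]) : complex.Im q != 0 ->
  [/\ cx (fA2 q - fA4 q) (fA3 q - fA4 q) != 0, cx (fA3 q - fA4 q) (fA1 q - fA4 q) != 0,
      cx (fA1 q - fA4 q) (fA2 q - fA4 q) != 0 &
      cx (fA2 q - fA4 q) (fA3 q - fA4 q) + cx (fA3 q - fA4 q) (fA1 q - fA4 q)
        + cx (fA1 q - fA4 q) (fA2 q - fA4 q) != 0].
Proof.
case: q => al be /= hb.
have hb2 : 0 < be ^+ 2 by rewrite exprn_even_gt0 //= hb orbT.
have E1 : cx (fA2 (al +i* be) - fA4 (al +i* be)) (fA3 (al +i* be) - fA4 (al +i* be))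
   = -3 * be * ((1 + al) ^+ 2 + be ^+ 2) by rewrite /cx /fA1 /fA2 /fA3 /fA4 /=; ring.
have E2 : cx (fA3 (al +i* be) - fA4 (al +i* be)) (fA1 (al +i* be) - fA4 (al +i* be))
   = -3 * be * ((1 - 2 * al) ^+ 2 + 4 * be ^+ 2) by rewrite /cx /fA1 /fA2 /fA3 /fA4 /=; ring.
have E3 : cx (fA1 (al +i* be) - fA4 (al +i* be)) (fA2 (al +i* be) - fA4 (al +i* be))
   = 18 * be * (al ^+ 2 - al + 1 + be ^+ 2) by rewrite /cx /fA1 /fA2 /fA3 /fA4 /=; ring.
have n3 : (-3 : R) != 0 by rewrite oppr_eq0 pnatr_eq0.
have n18 : (18 : R) != 0 by rewrite pnatr_eq0.
split.
- rewrite E1 !mulf_neq0 //; apply: lt0r_neq0.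
  by have := sqr_ge0 (1 + al); lra.
- rewrite E2 !mulf_neq0 //; apply: lt0r_neq0.
  by have := sqr_ge0 (1 - 2 * al); lra.
- rewrite E3 !mulf_neq0 //; apply: lt0r_neq0.
  by have := sqr_ge0 (2 * al - 1); nra.
- rewrite E1 E2 E3.
  rewrite (_ : -3 * be * ((1 + al) ^+ 2 + be ^+ 2) + -3 * be * ((1 - 2 * al) ^+ 2 + 4 * be ^+ 2)
     + 18 * be * (al ^+ 2 - al + 1 + be ^+ 2) = 3 * be * ((al - 2) ^+ 2 + be ^+ 2)); last by ring.
  rewrite !mulf_neq0 ?pnatr_eq0 //; apply: lt0r_neq0.
  by have := sqr_ge0 (al - 2); lra.
Qed.

Lemma fig_Q (q : R[i]) : complex.Im q != 0 ->
  cross_ratio (fA1 q) (fA2 q) (fA3 q) (fA4 q) = q.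
Proof.
move=> hq; have [h1 h2 h3 _] := @fig_D _ hq.
have /and5P [a12 a13 a14 a23 /andP [a24 a34]] := @distinct_of_D _ _ _ _ h1 h2 h3.
have hDn : (fA2 q - fA3 q) * (fA4 q - fA1 q) != 0.
  by rewrite mulf_neq0 // subr_eq0 // eq_sym.
rewrite /cross_ratio (_ : (fA1 q - fA2 q) * (fA3 q - fA4 q)
   = q * ((fA2 q - fA3 q) * (fA4 q - fA1 q))) ?mulfK //.
case: q {hq h1 h2 h3 a12 a13 a14 a23 a24 a34 hDn} => al be.
by apply/eqP; rewrite eq_complex /fA1 /fA2 /fA3 /fA4 /=; apply/andP; split; apply/eqP; ring.
Qed.


Lemma mob_inj (M : mobius R) x y : mob_c M * x + mob_d M != 0 -> mob_c M * y + mob_d M != 0 ->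
  x != y -> mob_img M x != mob_img M y.
Proof.
move=> hx hy hxy; rewrite !mob_imgE // -subr_eq0 mob_diff //.
case: M hx hy => a b c d hdet /= hx hy.
apply: mulf_neq0; first by rewrite mulf_neq0 // subr_eq0.
by rewrite invr_eq0 mulf_neq0.
Qed.

Lemma mob_cr (M : mobius R) z1 z2 z3 z4 :
  mob_c M * z1 + mob_d M != 0 -> mob_c M * z2 + mob_d M != 0 ->
  mob_c M * z3 + mob_d M != 0 -> mob_c M * z4 + mob_d M != 0 ->
  z2 != z3 -> z4 != z1 ->
  cross_ratio (mob_img M z1) (mob_img M z2) (mob_img M z3) (mob_img M z4)
  = cross_ratio z1 z2 z3 z4.
Proof.
move=> h1 h2 h3 h4 h23 h41; rewrite !mob_imgE //.
by apply: cr_mob => //; case: M {h1 h2 h3 h4}.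
Qed.

Lemma pole (M : mobius R) : exists Ps, mob_app M Ps = None /\ forall z, mob_c M * z + mob_d M != 0 -> Ps <> Some z.
Proof.
case: M => a b c d hdet /=.
case: (eqVneq c 0) => hc.
  by exists None.
exists (Some (- d / c)); split.
  by rewrite /= mulrC divfK // addNr eqxx.
by move=> z hz [ez]; move: hz; rewrite -ez mulrC divfK // addNr eqxx.
Qed.

Lemma Im_gen (x : R[i]) : ('Im x != 0)%R -> complex.Im x != 0.
Proof. by rewrite -complexIm; apply: contra => /eqP ->. Qed.

Arguments Im_gen {x}. Arguments mob_fin {M Ps z}. Arguments mob_cr {M z1 z2 z3 z4}.
Arguments mob_inj {M x y}. Arguments cr_scale {u z1 z2 z3 z4}.
Arguments core {A1 A2 A3 A4 B1 B2 B3 B4}. Arguments fig_D {q}. Arguments fig_Q {q}.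
Arguments distinct_of_D {A1 A2 A3 A4}. Arguments recip_fig {A1 A2 A3 A4}.
Arguments mob_interp {P1 P2 P3 P4 Q1 Q2 Q3 Q4}.

Lemma main (F1 F2 F3 F123 F23 F13 F12 F : R[i]) :
  [&& F1 != F2, F1 != F3, F1 != F123, F2 != F3, F2 != F123 & F3 != F123] ->
  [&& F23 != F13, F23 != F12, F23 != F, F13 != F12, F13 != F & F12 != F] ->
  ('Im (cross_ratio F1 F2 F3 F123) != 0)%R ->
  ('Im (cross_ratio F23 F13 F12 F) != 0)%R ->
  ((exists Ps Ps' : sphere R,
      [/\ config46 F1 F2 F3 F123 Ps, config46 F23 F13 F12 F Ps' &
          reciprocal46 F1 F2 F3 F123 F23 F13 F12 F Ps Ps'])
   <-> cross_ratio F1 F2 F3 F123 = cross_ratio F23 F13 F12 F).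
Proof.
move=> hF hF' hImF hImF'.
have hI := Im_gen hImF.
move: (hF) => /and5P [f12 f13 f14 f23 /andP [f24 f34]].
move: (hF') => /and5P [g12 g13 g14 g23 /andP [g24 g34]].
split.
- move=> [Ps [Ps' [[_ [s1 s2 s3 s4]] [_ [t1 t2 t3 t4]] rec]]].
  move: rec => [M [M' [u [hM hM' hu /= [[p1 p2 p3] [p4 p5 p6]]]]]].
  have c1 := mob_fin hM s1. have c2 := mob_fin hM s2.
  have c3 := mob_fin hM s3. have c4 := mob_fin hM s4.
  have d1 := mob_fin hM' t1. have d2 := mob_fin hM' t2.
  have d3 := mob_fin hM' t3. have d4 := mob_fin hM' t4.
  have u0 : u != 0.
    apply/eqP => u0; move: hu; rewrite u0 normr0 => /esym/eqP.
    by rewrite oner_eq0.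
  have f41 : F123 != F1 by rewrite eq_sym.
  have QA := mob_cr c1 c2 c3 c4 f23 f41.
  have QB : cross_ratio (u * mob_img M' F23) (u * mob_img M' F13) (u * mob_img M' F12)
      (u * mob_img M' F) = cross_ratio F23 F13 F12 F.
    rewrite cr_scale ?mob_cr ?mob_inj //; by rewrite eq_sym.
  rewrite -QA -QB; apply: core => //.
  + by rewrite mob_inj.
  + by rewrite mob_inj.
  + by rewrite mob_inj // eq_sym.
  + by rewrite mob_inj.
  + by rewrite mob_inj.
  + by rewrite (inj_eq (mulfI u0)) mob_inj // eq_sym.
  + by rewrite (inj_eq (mulfI u0)) mob_inj // eq_sym.
  + by rewrite (inj_eq (mulfI u0)) mob_inj // eq_sym.
  + by rewrite QA.
- move=> hq.
  have [d1 d2 d3 dS] := fig_D hI.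
  have QA := fig_Q hI.
  have /and5P [a12 a13 a14 a23 /andP [a24 a34]] := distinct_of_D d1 d2 d3.
  have hIA : complex.Im (cross_ratio (fA1 (cross_ratio F1 F2 F3 F123))
      (fA2 (cross_ratio F1 F2 F3 F123)) (fA3 (cross_ratio F1 F2 F3 F123))
      (fA4 (cross_ratio F1 F2 F3 F123))) != 0 by rewrite QA.
  have [B1 [B2 [B3 [B4 [hB QAB [p1 p2 p3] [p4 p5 p6]]]]]] := recip_fig d1 d2 d3 dS hIA.
  move: (hB) => /and5P [b12 b13 b14 b23 /andP [b24 b34]].
  have [M [[m1c m1e] [m2c m2e] [m3c m3e] [m4c m4e]]] :=
    mob_interp f12 f13 f14 f23 f24 f34 a12 a13 a14 a23 a24 a34 (esym QA).
  have [M' [[n1c n1e] [n2c n2e] [n3c n3e] [n4c n4e]]] :=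
    mob_interp g12 g13 g14 g23 g24 g34 b12 b13 b14 b23 b24 b34 (etrans (esym hq) (etrans (esym QA) QAB)).
  have [Ps [hP hPz]] := pole M.
  have [Ps' [hP' hPz']] := pole M'.
  exists Ps, Ps'; split.
  + by split => //; split; apply: hPz.
  + by split => //; split; apply: hPz'.
  + exists M, M', 1; split => //; first by rewrite normr1.
    rewrite /= !mul1r m1e m2e m3e m4e n1e n2e n3e n4e.
    by split; split.
Qed.

End S.

Arguments main {R}.
Theorem theorem2 (R : rcfType) (F1 F2 F3 F123 F23 F13 F12 F : R[i]) :
  (* genericity: pairwise distinct points in each quadruplet, neither
     quadruplet concyclic (non-real cross-ratio) *)
  [&& F1 != F2, F1 != F3, F1 != F123, F2 != F3, F2 != F123 & F3 != F123] ->
  [&& F23 != F13, F23 != F12, F23 != F, F13 != F12, F13 != F & F12 != F] ->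
  'Im (cross_ratio F1 F2 F3 F123) != 0 ->
  'Im (cross_ratio F23 F13 F12 F) != 0 ->
  ((exists Ps Ps' : sphere R,
      [/\ config46 F1 F2 F3 F123 Ps, config46 F23 F13 F12 F Ps' &
          reciprocal46 F1 F2 F3 F123 F23 F13 F12 F Ps Ps'])
   <-> cross_ratio F1 F2 F3 F123 = cross_ratio F23 F13 F12 F).
Proof. exact: main. Qed.
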